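(* Let $N\in\mathbb{N}$, let $\mathcal{T}$ be an $N$-regular rooted tree, let $\mathcal{S}\subset\mathcal{T}$ be a subtree, and let $1\le m\le N$ be an integer. Suppose that for every $m$-regular subtree $\mathcal{R}$ of $\mathcal{T}$, the set $\mathcal{S}\cap\mathcal{R}$ is infinite. Then $\mathcal{S}$ has an $(N-m+1)$-regular subtree.
   Context: A rooted tree is a connected graph without cycles with a distinguished vertex (the root), identified with its vertex set. The height of a vertex is the length of the unique path from the root to it. A successor of a vertex $\tau'$ is a vertex adjacent to $\tau'$ of height one greater. A subtree of $\mathcal{T}$ means a subset of vertices that contains the root of $\mathcal{T}$ and is closed under taking predecessors (so it is a rooted tree with the same root). A rooted tree is $N$-regular if every vertex has exactly $N$ successors. *)

(* Defs.v *)
(* The N-regular rooted tree is modelled concretely as the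
   tree of finite words over the alphabet 'I_N: the root is the empty word
   [::], and the successors of a vertex s are the words rcons s i, i : 'I_N.
   Every N-regular rooted tree is isomorphic to this one. *)
From mathcomp Require Import all_boot.

Set Implicit Arguments.
Unset Strict Implicit.
Unset Printing Implicit Defensive.

Definition vertex (N : nat) := seq 'I_N.

Definition is_subtree (N : nat) (S : vertex N -> Prop) : Prop :=
  S [::] /\ (forall (s : vertex N) (i : 'I_N), S (rcons s i) -> S s).

Definition has_k_successors_in (N : nat) (R : vertex N -> Prop) (k : nat)
    (s : vertex N) : Prop :=
  exists l : seq 'I_N,
    [/\ uniq l, size l = k & forall i : 'I_N, R (rcons s i) <-> i \in l].

Definition is_regular_subtree (N : nat) (k : nat) (R : vertex N -> Prop) : Prop :=
  is_subtree R /\ (forall s : vertex N, R s -> has_k_successors_in R k s).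

Definition infinite_set (N : nat) (A : vertex N -> Prop) : Prop :=
  ~ (exists l : seq (vertex N), forall s : vertex N, A s -> s \in l).

(* Main.v *)
Require Import Defs.
From mathcomp Require Import all_boot.
From mathcomp Require Import boolp zify.
From Stdlib Require Import Classical ClassicalEpsilon.

Set Implicit Arguments.
Unset Strict Implicit.
Unset Printing Implicit Defensive.

Fixpoint goodrev N (f : vertex N -> seq 'I_N) (r : seq 'I_N) : bool :=
  if r is i :: r' then goodrev f r' && (i \in f (rev r')) else true.
Definition Rf N (f : vertex N -> seq 'I_N) (s : vertex N) : Prop := goodrev f (rev s).

Lemma Rf_nil N f : @Rf N f [::]. Proof. by []. Qed.
Lemma Rf_rcons N f s i : @Rf N f (rcons s i) <-> Rf f s /\ i \in f s.
Proof. rewrite /Rf rev_rcons /= revK. by split => [/andP|[-> ->]]. Qed.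

Lemma Rf_regular N k f :
  (forall s, Rf f s -> uniq (f s) /\ size (f s) = k) -> is_regular_subtree k (@Rf N f).
Proof.
move=> H; split; first split.
- exact: Rf_nil.
- by move=> s i /Rf_rcons [].
- move=> s Rs; case: (H s Rs) => u sz; exists (f s); split => // i.
  rewrite Rf_rcons; tauto.
Qed.

Fixpoint B N m (S : vertex N -> Prop) n (s : vertex N) : Prop :=
  if n is n'.+1 then ~ S s \/ exists l : seq 'I_N,
     [/\ uniq l, size l = m & forall i, i \in l -> B m S n' (rcons s i)]
  else False.

Lemma B_S N m S n s : @B N m S n s -> B m S n.+1 s.
Proof.
elim: n s => [|n IH] s //= [H|[l [u sz H]]]; first by left.
right; exists l; split => // i /H; exact: IH.
Qed.

Lemma B_mono N m S n n' s : n <= n' -> @B N m S n s -> B m S n' s.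
Proof.
elim: n' => [|n' IH]; first by rewrite leqn0 => /eqP ->.
rewrite leq_eqVlt => /orP [/eqP -> //| /IH H] /H; exact: B_S.
Qed.

Lemma ex_min (P : nat -> Prop) n : P n -> exists n0, P n0 /\ forall k, P k -> n0 <= k.
Proof.
elim/ltn_ind: n => n IH Pn.
case: (classic (exists k, k < n /\ P k)) => [[k [lt Pk]]|H]; first exact: IH Pk.
exists n; split => // k Pk; rewrite leqNgt; apply/negP => lt; apply: H; by exists k.
Qed.

Fixpoint allw N (k : nat) : seq (vertex N) :=
  if k is k'.+1 then [::] :: [seq i :: w | i <- enum 'I_N, w <- allw N k'] else [:: [::]].

Lemma allwP N k (s : vertex N) : size s <= k -> s \in allw N k.
Proof.
elim: k s => [|k IH] [|i s] //=; try by rewrite inE.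
rewrite ltnS => /IH H; rewrite inE; apply/orP; right.
apply: (allpairs_f (fun i w => i :: w)) => //; by rewrite mem_enum.
Qed.

Theorem proposition2p1 (N m : nat) (S : vertex N -> Prop) :
  is_subtree S ->
  1 <= m <= N ->
  (forall R : vertex N -> Prop,
      is_regular_subtree m R -> infinite_set (fun s => S s /\ R s)) ->
  exists R' : vertex N -> Prop,
    is_regular_subtree (N - m + 1) R' /\ (forall s, R' s -> S s).
Proof.
move=> [S0 Sp] /andP [m1 mN] Hinf.
case: (classic (exists n, B m S n [::])) => [[n Bn]|noB].
- exfalso.
  pose Q (p : vertex N) (l : seq 'I_N) := [/\ uniq l, size l = m &
     forall n, S p -> B m S n.+1 p -> forall i, i \in l -> B m S n (rcons p i)].
  have HQ : forall p, exists l, Q p l.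
  { move=> p. case: (classic (exists n, S p /\ B m S n.+1 p)) => [[n0 Hn0]|nH].
    - have [n1 [H1 min1]] := @ex_min (fun n => S p /\ B m S n.+1 p) n0 Hn0.
      case: H1 => Sp1 Bn1.
      case: Bn1 => [//|[l [u sz Hl]]].
      exists l; split => // k Spk Bk i il.
      apply: (B_mono (min1 k _)); [by split | exact: Hl].
    - exists (take m (enum 'I_N)); split.
      + by rewrite take_uniq // enum_uniq.
      + rewrite size_take size_enum_ord; case: ltnP => // h.
        by apply/anti_leq; rewrite h mN.
      + move=> k Spp Bk; exfalso; apply: nH; by exists k. }
  have [f Hf] : exists f : vertex N -> seq 'I_N, forall p, Q p (f p).
  { exists (fun p => proj1_sig (constructive_indefinite_description _ (HQ p))) => p.
    exact: proj2_sig (constructive_indefinite_description _ (HQ p)). }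
  have Hreg : is_regular_subtree m (Rf f).
  { apply: Rf_regular => s _; by case: (Hf s). }
  have key : forall s, Rf f s -> S s -> B m S (n - size s) s /\ size s < n.
  { elim/last_ind => [_ _|s i IH /Rf_rcons [Rs' il] Ssi].
    - rewrite subn0; split; first exact: Bn. by case: n Bn.
    - have Ss' := Sp _ _ Ssi.
      have [Bs lt] := IH Rs' Ss'.
      have e : n - size s = (n - size (rcons s i)).+1.
      { rewrite size_rcons; lia. }
      have Bc : B m S (n - size (rcons s i)) (rcons s i).
      { case: (Hf s) => _ _ H; apply: H => //; by rewrite -e. }
      split => //. move: Bc; rewrite size_rcons.
      case E: (n - (size s).+1) => [|k] //= _. by rewrite -subn_gt0 E. }
  apply: (Hinf _ Hreg). exists (allw N n) => s [Ss Rs]. apply: allwP.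
  by case: (key s Rs Ss) => _ /ltnW.
- pose K s := S s /\ forall n, ~ B m S n s.
  have HK : forall s, K s -> exists l : seq 'I_N,
      [/\ uniq l, size l = N - m + 1 & forall i, i \in l -> K (rcons s i)].
  { move=> s [Ss nB].
    pose Bad := [set i : 'I_N | `[< exists n, B m S n (rcons s i) >]].
    have cB : #|Bad| < m.
    { rewrite ltnNge; apply/negP => h.
      pose l := take m (enum Bad).
      have : forall i, i \in l -> exists n, B m S n (rcons s i).
      { move=> i /mem_take; rewrite mem_enum inE => /asboolP //. }
      have gather : forall l' : seq 'I_N,
          (forall i, i \in l' -> exists n, B m S n (rcons s i)) ->
          exists n, forall i, i \in l' -> B m S n (rcons s i).
      { elim => [_|j l' IH H]; first by exists 0.
        have [n1 Hn1] := H j (mem_head _ _).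
        have [n2 Hn2] : exists n, forall i, i \in l' -> B m S n (rcons s i).
        { apply: IH => i il; apply: H; by rewrite inE il orbT. }
        exists (maxn n1 n2) => i; rewrite inE => /orP [/eqP -> | il].
        - exact: (B_mono (leq_maxl n1 n2)).
        - exact: (B_mono (leq_maxr n1 n2)) (Hn2 _ il). }
      move=> /gather [n0 Hn0]. apply: (nB n0.+1). right. exists l; split => //.
      + by rewrite take_uniq // enum_uniq.
      + rewrite size_take -cardE; case: ltnP => // h'.
        by apply/anti_leq; rewrite h h'. }
    have hc := cardsC Bad; rewrite card_ord in hc.
    exists (take (N - m + 1) (enum (~: Bad))). split.
    - by rewrite take_uniq // enum_uniq.
    - rewrite size_take -cardE; case: ltnP => // h; lia.
    - move=> i /mem_take; rewrite mem_enum inE => iB.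
      have nb : ~ exists n, B m S n (rcons s i).
      { move=> hh; move/negP: iB; apply; rewrite inE; exact/asboolP. }
      split.
      + apply: NNPP => nS; apply: nb; exists 1; by left.
      + move=> n Bn; apply nb; by exists n. }
  have HK' : forall s, exists l : seq 'I_N, K s ->
      [/\ uniq l, size l = N - m + 1 & forall i, i \in l -> K (rcons s i)].
  { move=> s; case: (classic (K s)) => [Ks|nK].
    - have [l Hl] := HK s Ks; by exists l.
    - by exists [::]. }
  have [g Hg] : exists g : vertex N -> seq 'I_N, forall s, K s ->
      [/\ uniq (g s), size (g s) = N - m + 1 & forall i, i \in g s -> K (rcons s i)].
  { exists (fun p => proj1_sig (constructive_indefinite_description _ (HK' p))) => p.
    exact: proj2_sig (constructive_indefinite_description _ (HK' p)). }
  have RK : forall s, Rf g s -> K s.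
  { elim/last_ind => [_|s i IH /Rf_rcons [Rs il]].
    - split => // n h; apply: noB; by exists n.
    - have [_ _ H] := Hg s (IH Rs); exact: H. }
  exists (Rf g); split.
  + apply: Rf_regular => s Rs; by have [u sz _] := Hg s (RK s Rs).
  + by move=> s /RK [].
Qed.
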